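(* Let $k$ be an algebraically closed field of characteristic zero and let $X\subset\mathbb P^n$ be a chain of closed subvarieties $X_1,\dots,X_\ell$ with saturated ideal $I_X=\bigcap_iI_{X_i}\subset k[x_0,\dots,x_n]$, such that for integers $n_0=0<n_1<\cdots<n_\ell=n$ one has $X_i\subset\{x_0=\cdots=x_{n_{i-1}-1}=0,\ x_{n_i+1}=\cdots=x_n=0\}$. Let $T_i=\langle x_{n_{i-1}},\dots,x_{n_i-1}\rangle\langle x_{n_i+1},\dots,x_n\rangle$ for $i=1,\dots,\ell-1$. Then for any monomial order $\prec$ on $k[x_0,\dots,x_n]$, \[ \mathrm{in}_\prec(I_X)=\sum_{i=1}^\ell\langle\mathrm{in}_\prec(I_{X_i}\cap k[x_{n_{i-1}},\dots,x_{n_i}])\rangle+\sum_{i=1}^{\ell-1}T_i=\sum_{i=1}^\ell\langle\mathrm{in}_\prec(I_X\cap k[x_{n_{i-1}},\dots,x_{n_i}])\rangle+\sum_{i=1}^{\ell-1}T_i, \] where each initial ideal $\mathrm{in}_\prec(J\cap k[x_{n_{i-1}},\dots,x_{n_i}])$ is computed in $k[x_{n_{i-1}},\dots,x_{n_i}]$ with the restricted order and $\langle\cdot\rangle$ denotes the generated ideal in $k[x_0,\dots,x_n]$.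
   Context: A chain of subvarieties means $X=\bigcup_iX_i$ and $X_i\cap X_j\neq\emptyset$ iff $|i-j|=1$; $I_{X_i}$ is the saturated homogeneous ideal of $X_i$. *)

(* Defs.v *)
From HB Require Import structures.
From mathcomp Require Import all_boot all_order all_algebra.
From mathcomp Require Import mpoly.
Set Implicit Arguments. Unset Strict Implicit. Unset Printing Implicit Defensive.
Import Order.TTheory GRing.Theory.
Local Open Scope ring_scope.

Section Defs.
Variables (k : fieldType) (n : nat).
(* polynomial ring k[x_0,...,x_n] : {mpoly k[n.+1]}, variable x_j = 'X_j, j : 'I_(n.+1) *)
Notation Poly := {mpoly k[n.+1]}.
Notation Mon := 'X_{1..n.+1}.
(* points of k^{n+1}; a subset of P^n is represented by its affine cone *)
Notation Pt := ('I_(n.+1) -> k).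

Definition pt_nonzero (v : Pt) : Prop := exists j, v j != 0.

Definition homogeneous (f : Poly) : Prop :=
  exists d, forall m, m \in msupp f -> mdeg m = d.

Definition proj_closed (X : Pt -> Prop) : Prop :=
  exists S : Poly -> Prop, (forall f, S f -> homogeneous f) /\
    forall v, X v <-> (pt_nonzero v /\ forall f, S f -> f.@[v] = 0).

Definition proj_variety (X : Pt -> Prop) : Prop :=
  proj_closed X /\ (exists v, X v) /\
  forall Y Z, proj_closed Y -> proj_closed Z ->
    (forall v, X v <-> (Y v \/ Z v)) ->
    (forall v, X v -> Y v) \/ (forall v, X v -> Z v).

(* saturated homogeneous ideal of X: all polynomials vanishing on X *)
Definition vanishing_ideal (X : Pt -> Prop) : Poly -> Prop :=
  fun f => forall v, X v -> f.@[v] = 0.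

Definition gen_ideal_in (P : Poly -> Prop) (S : Poly -> Prop) : Poly -> Prop :=
  fun f => exists r (g h : nat -> Poly),
    (forall i, (i < r)%N -> P (g i) /\ S (h i)) /\ f = \sum_(i < r) g i * h i.

Definition whole (f : Poly) : Prop := True.

Definition gen_ideal (S : Poly -> Prop) : Poly -> Prop := gen_ideal_in whole S.

Definition monomial_order (lt : rel Mon) : Prop :=
  [/\ (forall m, ~~ lt m m),
      (forall m1 m2 m3, lt m1 m2 -> lt m2 m3 -> lt m1 m3),
      (forall m1 m2, m1 != m2 -> lt m1 m2 || lt m2 m1),
      (forall m1 m2 p, lt m1 m2 -> lt (m1 + p)%MM (m2 + p)%MM) &
      (forall m, m != 0%MM -> lt 0%MM m)].

Definition is_lead (lt : rel Mon) (f : Poly) (m : Mon) : Prop :=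
  m \in msupp f /\ forall m', m' \in msupp f -> m' != m -> lt m' m.

Definition in_vars (a b : nat) (f : Poly) : Prop :=
  forall m, m \in msupp f -> forall j : 'I_(n.+1), (m j != 0)%N -> (a <= j <= b)%N.

(* in_lt(J ∩ k[x_a..x_b]), computed in k[x_a..x_b] with the restricted order:
   the ideal of the subring generated by leading monomials of nonzero elements *)
Definition initial_sub (lt : rel Mon) (J : Poly -> Prop) (a b : nat) : Poly -> Prop :=
  gen_ideal_in (in_vars a b)
    (fun p => exists f m, [/\ J f, in_vars a b f, f != 0, is_lead lt f m & p = 'X_[m]]).

Definition initial_ideal (lt : rel Mon) (J : Poly -> Prop) : Poly -> Prop :=
  gen_ideal (fun p => exists f m, [/\ J f, f != 0, is_lead lt f m & p = 'X_[m]]).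

Definition var_ideal (a b : nat) : Poly -> Prop :=
  gen_ideal (fun p => exists j : 'I_(n.+1), (a <= j <= b)%N /\ p = 'X_j).

Definition ideal_add (I J : Poly -> Prop) : Poly -> Prop :=
  fun f => exists g h, I g /\ J h /\ f = g + h.

Definition ideal_mul (I J : Poly -> Prop) : Poly -> Prop :=
  gen_ideal (fun f => exists g h, I g /\ J h /\ f = g * h).

(* sum of ideals I lo + ... + I (hi-1) (the zero ideal if the range is empty) *)
Definition ideal_sum (I : nat -> Poly -> Prop) (lo hi : nat) : Poly -> Prop :=
  fun f => exists g : nat -> Poly,
    (forall i, (lo <= i < hi)%N -> I i (g i)) /\ f = \sum_(lo <= i < hi) g i.

Definition same_ideal (I J : Poly -> Prop) : Prop := forall f, I f <-> J f.
End Defs.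

(* Main.v *)
Require Import Defs.
From HB Require Import structures.
From mathcomp Require Import all_boot all_order all_algebra.
From mathcomp Require Import mpoly.
From mathcomp Require Import zify.
From Stdlib Require Import FunctionalExtensionality.
Import GRing.Theory.
Local Open Scope ring_scope.
Set Implicit Arguments. Unset Strict Implicit. Unset Printing Implicit Defensive.

Section Gen.
Variables (k : fieldType) (n : nat).
Local Notation Poly := {mpoly k[n.+1]}.

Definition is_ideal (I : Poly -> Prop) :=
  [/\ I 0, (forall a b, I a -> I b -> I (a + b)) & (forall c a, I a -> I (c * a))].

Lemma gen_ideal_in_sub P S (I : Poly -> Prop) : is_ideal I -> (forall s, S s -> I s) ->
  forall f, gen_ideal_in P S f -> I f.
Proof.
move=> [I0 ID IM] SI f [r [g [h [H ->]]]].
elim/big_ind: _ => //.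
move=> i _; apply: IM; apply: SI; exact: (H i (ltn_ord i)).2.
Qed.

Lemma gen_ideal_base S (s : Poly) : S s -> gen_ideal S s.
Proof.
move=> Ss; exists 1%N, (fun _ => 1), (fun _ => s); split.
  by move=> i _; split.
by rewrite big_ord1 mul1r.
Qed.

Lemma gen_ideal_ideal (S : Poly -> Prop) : is_ideal (gen_ideal S).
Proof.
split.
- exists 0%N, (fun _ => 0), (fun _ => 0); split => //; by rewrite big_ord0.
- move=> a b [r1 [g1 [h1 [H1 ->]]]] [r2 [g2 [h2 [H2 ->]]]].
  exists (r1 + r2)%N, (fun i => if (i < r1)%N then g1 i else g2 (i - r1)%N),
    (fun i => if (i < r1)%N then h1 i else h2 (i - r1)%N); split.
    move=> i Hi; case: ifP => Hir; first exact: H1.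
    apply: H2; rewrite ltn_subLR //; by rewrite leqNgt Hir.
  rewrite big_split_ord /=; congr (_ + _); apply: eq_bigr => i _.
    by rewrite /= ltn_ord.
  by rewrite /= ltnNge leq_addr /= addKn.
- move=> c a [r [g [h [H ->]]]].
  exists r, (fun i => c * g i), h; split => //.
  by rewrite mulr_sumr; apply: eq_bigr => i _; rewrite mulrA.
Qed.

Lemma gen_ideal_min S (I : Poly -> Prop) : is_ideal I -> (forall s, S s -> I s) ->
  forall f, gen_ideal S f -> I f.
Proof. exact: gen_ideal_in_sub. Qed.

Lemma ideal_sum_ideal (I : nat -> Poly -> Prop) lo hi :
  (forall i, (lo <= i < hi)%N -> is_ideal (I i)) -> is_ideal (ideal_sum I lo hi).
Proof.
move=> HI; split.
- exists (fun _ => 0); split; last by rewrite big1.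
  by move=> i Hi; case: (HI i Hi).
- move=> a b [g1 [H1 ->]] [g2 [H2 ->]]; exists (fun i => g1 i + g2 i); split.
    by move=> i Hi; case: (HI i Hi) => _ D _; apply: D; [apply: H1|apply: H2].
  by rewrite big_split.
- move=> c a [g [H ->]]; exists (fun i => c * g i); split.
    by move=> i Hi; case: (HI i Hi) => _ _ M; apply: M; apply: H.
  by rewrite mulr_sumr.
Qed.

Lemma ideal_sum_el (I : nat -> Poly -> Prop) lo hi i0 x :
  (forall i, (lo <= i < hi)%N -> I i 0) -> (lo <= i0 < hi)%N -> I i0 x ->
  ideal_sum I lo hi x.
Proof.
move=> H0 Hi0 Hx; exists (fun i => if i == i0 then x else 0); split.
  by move=> i Hi; case: eqP => [->|_] //; apply: H0.
rewrite (bigD1_seq i0) ?mem_index_iota ?iota_uniq //= eqxx big1 ?addr0 //.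
by move=> i /negbTE ->.
Qed.

Lemma ideal_add_ideal I J : is_ideal I -> is_ideal J -> is_ideal (ideal_add I J).
Proof.
move=> [I0 ID IM] [J0 JD JM]; split.
- by exists 0, 0; rewrite addr0.
- move=> a b [g1 [h1 [G1 [H1 ->]]]] [g2 [h2 [G2 [H2 ->]]]].
  exists (g1 + g2), (h1 + h2); do !split; [exact: ID|exact: JD|].
  by rewrite addrACA.
- move=> c a [g [h [G [H ->]]]]; exists (c * g), (c * h); do !split; auto.
  by rewrite mulrDr.
Qed.

Lemma ideal_addl (I J : Poly -> Prop) x : J 0 -> I x -> ideal_add I J x.
Proof. by move=> J0 Ix; exists x, 0; rewrite addr0. Qed.
Lemma ideal_addr (I J : Poly -> Prop) x : I 0 -> J x -> ideal_add I J x.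
Proof. by move=> I0 Jx; exists 0, x; rewrite add0r. Qed.

End Gen.

Section Poly.
Variables (k : closedFieldType) (n : nat).
Local Notation Poly := {mpoly k[n.+1]}.
Local Notation Mon := 'X_{1..n.+1}.

Definition filt (S : pred Mon) (f : Poly) : Poly :=
  \sum_(m <- msupp f | S m) f@_m *: 'X_[m].

Lemma mcoeff_filt S f m : (filt S f)@_m = if S m then f@_m else 0.
Proof.
rewrite /filt raddf_sum /= big_mkcond /=.
under eq_bigr => m' _ do rewrite mcoeffZ mcoeffX.
case: (boolP (m \in msupp f)) => Hm.
  rewrite (bigD1_seq m) ?msupp_uniq //= big1 ?addr0.
    by case: (S m); rewrite /= ?eqxx ?mulr1.
  by move=> m' /negbTE Hm'; case: (S m'); rewrite // Hm' mulr0.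
rewrite big_seq big1; first by case: (S m) => //; apply/esym/eqP; rewrite mcoeff_eq0.
move=> m' Hm'; case: (S m') => //; case: eqP => [E|]; last by rewrite mulr0.
by rewrite E in Hm'; rewrite (negbTE Hm) in Hm'.
Qed.

Lemma msupp_filt S f m : (m \in msupp (filt S f)) = S m && (m \in msupp f).
Proof. by rewrite !mcoeff_msupp mcoeff_filt; case: (S m); rewrite ?eqxx. Qed.

Lemma meval_filt S f v : (filt S f).@[v] = \sum_(m <- msupp f | S m) f@_m * \prod_i v i ^+ m i.
Proof.
rewrite /filt raddf_sum /=; apply: eq_bigr => m _.
by rewrite mevalZ mevalX.
Qed.

Lemma filt_eval_eq S f v : (forall m, m \in msupp f -> ~~ S m -> \prod_i v i ^+ m i = 0) ->
  (filt S f).@[v] = f.@[v].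
Proof.
move=> H; rewrite meval_filt mevalE [in RHS](bigID S) /= [X in _ = _ + X]big1_seq ?addr0 //.
by move=> m /andP [HS Hm]; rewrite H ?mulr0.
Qed.

Lemma prod_zero (v : 'I_(n.+1) -> k) (m : Mon) x : m x != 0%N -> v x = 0 ->
  \prod_i v i ^+ m i = 0.
Proof.
move=> Hm Hv; rewrite (bigD1 x) //= Hv expr0n.
by rewrite (negbTE Hm) mul0r.
Qed.

Definition ecv (c : 'I_(n.+1)) (t : k) := fun x : 'I_(n.+1) => if x == c then t else 0.
Definition pure (c : 'I_(n.+1)) (m : Mon) := [forall x, (m x != 0%N) ==> (x == c)].

Lemma prod_ecv c t (m : Mon) :
  \prod_i ecv c t i ^+ m i = if pure c m then t ^+ m c else 0.
Proof.
case: ifP => Hp.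
  rewrite (bigD1 c) //= /ecv eqxx big1 ?mulr1 // => i /negbTE Hi.
  rewrite Hi; move/forallP: Hp => /(_ i); rewrite Hi implybF negbK => /eqP ->.
  by rewrite expr0.
move/negbT: Hp; rewrite negb_forall => /existsP [x]; rewrite negb_imply => /andP [Hx Hxc].
by apply: (prod_zero Hx); rewrite /ecv (negbTE Hxc).
Qed.

Lemma poly_all_zero (p : {poly k}) : (forall t, t != 0 -> p.[t] = 0) -> p = 0.
Proof.
move=> H; apply/eqP; apply/negPn/negP => Hp.
have E := size_mulX Hp.
have Hs : size (p * 'X - 1) != 1%N.
  rewrite size_polyDl E.
    by rewrite eqSS size_poly_eq0.
  by rewrite size_polyN size_poly1 ltnS lt0n size_poly_eq0.
case/closed_rootP: Hs => x; rewrite /root !hornerE.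
case: (eqVneq x 0) => [->|Hx]; first by rewrite mulr0 sub0r oppr_eq0 oner_eq0.
by rewrite H // mul0r sub0r oppr_eq0 oner_eq0.
Qed.

Lemma pure_free (g : Poly) (c : 'I_(n.+1)) :
  (forall t : k, t != 0 -> g.@[ecv c t] = 0) ->
  forall m, m \in msupp g -> pure c m -> False.
Proof.
move=> H m0 Hm0 Hp0.
pose p : {poly k} := \sum_(m <- msupp g) (if pure c m then g@_m *: 'X^(m c) else 0).
have Hpt : forall t, p.[t] = g.@[ecv c t].
  move=> t; rewrite horner_sum mevalE; apply: eq_bigr => m _.
  rewrite prod_ecv; case: (pure c m); last by rewrite horner0 mulr0.
  by rewrite hornerZ hornerXn.
have p0 : p = 0 by apply: poly_all_zero => t Ht; rewrite Hpt H.
have : p`_(m0 c) = g@_m0.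
  rewrite coef_sum (bigD1_seq m0) ?msupp_uniq //= Hp0 coefZ coefXn eqxx mulr1 big1 ?addr0 //.
  move=> m Hm; case: ifP => Hpm; last by rewrite coef0.
  rewrite coefZ coefXn; case: eqP => [E|]; last by rewrite mulr0.
  exfalso; move/eqP: Hm; apply; apply/mnmP => x.
  case: (eqVneq x c) => [->//|Hxc].
  have Z : forall mm : Mon, pure c mm -> mm x = 0%N.
    move=> mm /forallP /(_ x); rewrite (negbTE Hxc) implybF negbK => /eqP //.
  by rewrite !Z.
rewrite p0 coef0 => /esym /eqP; rewrite mcoeff_eq0 Hm0 //.
Qed.

Lemma homog_scale (f : Poly) (v : 'I_(n.+1) -> k) (s : k) :
  homogeneous f -> f.@[v] = 0 -> f.@[fun x => s * v x] = 0.
Proof.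
move=> [d Hd] Hv.
have -> : f.@[fun x => s * v x] = s ^+ d * f.@[v].
  rewrite !mevalE mulr_sumr big_seq [RHS]big_seq; apply: eq_bigr => m Hm.
  under eq_bigr => i _ do rewrite exprMn.
  rewrite big_split /= -(Hd m Hm) mdegE.
  have -> : \prod_(i < n.+1) s ^+ m i = s ^+ (\sum_i m i).
    by elim/big_rec2: _ => [|i a b _ ->]; rewrite ?expr0 // exprD.
  by rewrite mulrCA.
by rewrite Hv mulr0.
Qed.

End Poly.

Section Main.
Variables (k : closedFieldType) (n l : nat) (nn : nat -> nat)
  (X : nat -> ('I_(n.+1) -> k) -> Prop).
Local Notation Poly := {mpoly k[n.+1]}.
Local Notation Mon := 'X_{1..n.+1}.
Hypothesis Hl : (0 < l)%N.
Hypothesis H0 : nn 0%N = 0%N.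
Hypothesis Hmono : forall i, (i < l)%N -> (nn i < nn i.+1)%N.
Hypothesis Hnl : nn l = n.
Hypothesis Hvar : forall i, (1 <= i <= l)%N -> proj_variety (X i).
Hypothesis Hchain : forall i j, (1 <= i <= l)%N -> (1 <= j <= l)%N -> i <> j ->
     ((exists v, X i v /\ X j v) <-> (i = j.+1 \/ j = i.+1)).
Hypothesis Hcont : forall i, (1 <= i <= l)%N -> forall v, X i v ->
     forall x : 'I_(n.+1), ((x < nn i.-1)%N \/ (nn i < x)%N) -> v x = 0.

Lemma nn_lt i j : (i < j)%N -> (j <= l)%N -> (nn i < nn j)%N.
Proof.
move=> Hij; elim: j Hij => // j IH; rewrite ltnS leq_eqVlt => /orP [/eqP ->|Hij] Hj.
  exact: Hmono.
apply: ltn_trans (IH Hij (ltnW Hj)) (Hmono Hj).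
Qed.

Lemma nn_le i j : (i <= j)%N -> (j <= l)%N -> (nn i <= nn j)%N.
Proof.
by rewrite leq_eqVlt => /orP [/eqP ->//|Hij] Hj; apply: ltnW; apply: nn_lt.
Qed.

Lemma nn_lt_rev i j : (i <= l)%N -> (nn i < nn j)%N -> (i < j)%N.
Proof.
move=> Hi H; rewrite ltnNge; apply/negP => Hji.
by move: (nn_le Hji Hi); rewrite leqNgt H.
Qed.

Lemma nn_le_rev i j : (i <= l)%N -> (nn i <= nn j)%N -> (i <= j)%N.
Proof.
move=> Hi H; rewrite leqNgt; apply/negP => Hji.
by move: (nn_lt Hji Hi); rewrite ltnNge H.
Qed.

Lemma nn_le_n i : (i <= l)%N -> (nn i <= n)%N.
Proof. by move=> Hi; rewrite -Hnl; apply: nn_le. Qed.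

Lemma in_block i v x : (1 <= i <= l)%N -> X i v -> v x != 0 -> (nn i.-1 <= x <= nn i)%N.
Proof.
move=> Hi Hv Hx.
have H1 : ~~ (x < nn i.-1)%N.
  by apply/negP => H; move: Hx; rewrite (Hcont Hi Hv (or_introl H)) eqxx.
have H2 : ~~ (nn i < x)%N.
  by apply/negP => H; move: Hx; rewrite (Hcont Hi Hv (or_intror H)) eqxx.
by rewrite -leqNgt in H1; rewrite -leqNgt in H2; rewrite H1 H2.
Qed.

Lemma cone i v s : (1 <= i <= l)%N -> X i v -> s != 0 -> X i (fun x => s * v x).
Proof.
move=> Hi Hv Hs; case: (Hvar Hi) => [[S [SH SE]] _].
case/SE: Hv => [[j Hj] Hf]; apply/SE; split.
  by exists j; rewrite mulf_neq0.
by move=> f Sf; apply: homog_scale; [apply: SH | apply: Hf].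
Qed.

Definition cc (i : nat) : 'I_(n.+1) := inord (nn i).

Lemma cc_val i : (i <= l)%N -> (cc i : nat) = nn i.
Proof. by move=> Hi; rewrite /cc inordK // ltnS nn_le_n. Qed.

Lemma shared i : (1 <= i < l)%N -> forall t, t != 0 ->
  X i (ecv (cc i) t) /\ X i.+1 (ecv (cc i) t).
Proof.
move=> /andP [Hi1 Hil] t Ht.
have Hi : (1 <= i <= l)%N by rewrite Hi1 ltnW.
have Hi' : (1 <= i.+1 <= l)%N by rewrite Hil.
have [v [Xv Xv']] : exists v, X i v /\ X i.+1 v.
  apply/(Hchain Hi Hi'); [by move/eqP; rewrite ltn_eqF | by right].
have Hvc : forall x : 'I_(n.+1), x != cc i -> v x = 0.
  move=> x Hx; case: (ltngtP x (nn i)) => H.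
  - by apply: (Hcont Hi' Xv'); left.
  - by apply: (Hcont Hi Xv); right.
  - by move: Hx; rewrite -(inj_eq val_inj) /= cc_val ?H ?eqxx // ltnW.
have Hv0 : v (cc i) != 0.
  case: (Hvar Hi) => [[S [_ SE]] _]; case/SE: Xv => [[j Hj] _].
  by case: (eqVneq j (cc i)) => [<-//|/Hvc E]; rewrite E eqxx in Hj.
have -> : ecv (cc i) t = (fun x => (t / v (cc i)) * v x).
  apply: functional_extensionality => x; rewrite /ecv.
  case: eqP => [->|/eqP Hx]; first by rewrite divfK.
  by rewrite (Hvc x Hx) mulr0.
by split; apply: cone => //; rewrite mulf_neq0 // invr_eq0.
Qed.

Definition XX := fun v => exists2 i, (1 <= i <= l)%N & X i v.
Definition IX := vanishing_ideal XX.

Lemma pure_not_IX f i m : IX f -> (1 <= i < l)%N -> m \in msupp f -> pure (cc i) m -> False.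
Proof.
move=> Hf Hi; apply: pure_free => t Ht; apply: Hf.
exists i; last exact: (shared Hi Ht).1.
by case/andP: Hi => -> /ltnW.
Qed.

Definition inblock (j : nat) (m : Mon) :=
  [forall x : 'I_(n.+1), (m x != 0%N) ==> (nn j.-1 <= x <= nn j)%N].

Lemma two_blocks j j' (m : Mon) : (1 <= j <= l)%N -> (1 <= j' <= l)%N -> j != j' ->
  inblock j m -> (forall x : 'I_(n.+1), m x != 0%N -> (nn j'.-1 <= x <= nn j')%N) ->
  exists i, [/\ (1 <= i < l)%N, pure (cc i) m & (i = j \/ i.+1 = j)].
Proof.
move=> /andP [Hj1 Hjl] /andP [Hj1' Hjl'] Hne /forallP Hb Hb'.
case: (ltngtP j j') => Hjj; last by rewrite Hjj eqxx in Hne.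
- exists j; split; [by rewrite Hj1; apply: leq_trans Hjj Hjl' | | by left].
  apply/forallP => x; apply/implyP => Hx.
  move/implyP: (Hb x) => /(_ Hx) /andP [_ H1]; case/andP: (Hb' x Hx) => H2 _.
  have H3 : (nn j <= nn j'.-1)%N.
    by apply: nn_le; [rewrite -ltnS prednK // (leq_trans _ Hjj) | rewrite (leq_trans (leq_pred _))].
  rewrite -(inj_eq val_inj) /= cc_val //; apply/eqP/anti_leq.
  by rewrite H1 (leq_trans H3 H2).
- exists j.-1; split; last by right; lia.
  + lia.
  + apply/forallP => x; apply/implyP => Hx.
    move/implyP: (Hb x) => /(_ Hx) /andP [H1 _]; case/andP: (Hb' x Hx) => _ H2.
    have H3 : (nn j' <= nn j.-1)%N.
      by apply: nn_le; [rewrite -ltnS prednK // (leq_trans Hj1' Hjj) | rewrite (leq_trans (leq_pred _))].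
    rewrite -(inj_eq val_inj) /= cc_val ?(leq_trans (leq_pred _)) //; apply/eqP/anti_leq.
    by rewrite H1 (leq_trans H2 H3).
Qed.


Definition inT (m : Mon) :=
  [exists i : 'I_l, exists a : 'I_(n.+1), exists b : 'I_(n.+1),
    [&& (0 < i)%N, (nn i.-1 <= a)%N, (a < nn i)%N, (nn i < b)%N, m a != 0%N & m b != 0%N]].

Lemma pair_vanish i (a b : 'I_(n.+1)) j v : (1 <= i < l)%N -> (nn i.-1 <= a < nn i)%N ->
  (nn i < b)%N -> (1 <= j <= l)%N -> X j v -> v a = 0 \/ v b = 0.
Proof.
move=> Hi /andP [Ha1 Ha2] Hb Hj Xv.
case: (eqVneq (v a) 0) => [|Ha]; first by left.
case: (eqVneq (v b) 0) => [|Hb']; first by right.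
exfalso.
case/andP: (in_block Hj Xv Ha) => Ha3 _; case/andP: (in_block Hj Xv Hb') => _ Hb3.
have E1 : (j.-1 < i)%N.
  apply: nn_lt_rev; first lia.
  exact: leq_ltn_trans Ha3 Ha2.
have E2 : (i < j)%N.
  apply: nn_lt_rev; first lia.
  exact: leq_trans Hb Hb3.
lia.
Qed.

Lemma inT_vanish m j v : inT m -> (1 <= j <= l)%N -> X j v -> \prod_i v i ^+ m i = 0.
Proof.
move=> /existsP [i /existsP [a /existsP [b /and5P [Hi0 Ha1 Ha2 Hb /andP [Hma Hmb]]]]] Hj Xv.
have Hi : (1 <= i < l)%N by rewrite Hi0 ltn_ord.
have Ha : (nn i.-1 <= a < nn i)%N by rewrite Ha1 Ha2.
case: (pair_vanish Hi Ha Hb Hj Xv) => Hv.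
  exact: prod_zero Hma Hv.
exact: prod_zero Hmb Hv.
Qed.

Lemma cover m : ~~ inT m -> exists j, (1 <= j <= l)%N /\ inblock j m.
Proof.
move=> HT.
case: (boolP [exists x, m x != 0%N]); last first.
  rewrite negb_exists => /forallP H; exists 1%N; split; first by rewrite leqnn Hl.
  by apply/forallP => x; rewrite (negbTE (H x)).
move=> Hex.
pose P a := [exists x : 'I_(n.+1), (x == a :> nat) && (m x != 0%N)].
have HP : exists a, P a.
  by case/existsP: Hex => x Hx; exists (x : nat); apply/existsP; exists x; rewrite eqxx.
case: (ex_minnP HP) => a /existsP [ax /andP [/eqP Eax Hma]] Hmin.
have Hmin' : forall x : 'I_(n.+1), m x != 0%N -> (a <= x)%N.
  by move=> x Hx; apply: Hmin; apply/existsP; exists x; rewrite eqxx.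
case: (ltnP a n) => Han; last first.
  exists l; split; first by rewrite Hl leqnn.
  apply/forallP => x; apply/implyP => Hx.
  have H1 := Hmin' x Hx; have H2 := ltn_ord x; have H3 := nn_le (leq_pred l) (leqnn l).
  rewrite Hnl in H3 *; lia.
have HQ : exists i, (a < nn i)%N by exists l; rewrite Hnl.
case: (ex_minnP HQ) => i Hai Hmini.
have Hil : (i <= l)%N by apply: Hmini; rewrite Hnl.
have Hi1 : (1 <= i)%N by case: (i) Hai => //; rewrite H0.
have Hia : (nn i.-1 <= a)%N.
  rewrite leqNgt; apply/negP => /Hmini; lia.
case: (boolP [forall x : 'I_(n.+1), (m x != 0%N) ==> (x <= nn i)%N]) => Hall.
  exists i; split; first by rewrite Hi1 Hil.
  apply/forallP => x; apply/implyP => Hx.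
  move/forallP: Hall => /(_ x); rewrite Hx /= => ->; rewrite andbT.
  exact: leq_trans Hia (Hmin' x Hx).
exfalso; move: Hall; rewrite negb_forall => /existsP [b]; rewrite negb_imply -ltnNge => /andP [Hmb Hb].
have Hil' : (i < l)%N.
  apply: nn_lt_rev => //; rewrite Hnl; exact: leq_trans Hb (ltn_ord b).
move/negP: HT; apply; apply/existsP; exists (Ordinal Hil'); apply/existsP; exists ax.
apply/existsP; exists b; rewrite /= Eax Hia Hai Hb Hma Hmb; lia.
Qed.

Definition blk (m : Mon) := (find (fun j => inblock j m) (iota 1 l)).+1.

Lemma blk_spec m : ~~ inT m -> (1 <= blk m <= l)%N /\ inblock (blk m) m.
Proof.
move=> /cover [j [Hj Hb]].
have Hh : has (fun j => inblock j m) (iota 1 l).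
  by apply/hasP; exists j => //; rewrite mem_iota; lia.
have Hf := Hh; rewrite has_find size_iota in Hf.
split; first by rewrite /blk; lia.
move: (nth_find 0 Hh); rewrite nth_iota // add1n //.
Qed.

Lemma vanish_block j g : (1 <= j <= l)%N -> vanishing_ideal (X j) g ->
  in_vars (nn j.-1) (nn j) g -> IX g.
Proof.
move=> Hj Hg Hin v [i Hi Xv].
case: (eqVneq i j) => [E|Hij]; first by apply: Hg; rewrite -E.
rewrite mevalE big_seq big1 // => m Hm.
case: (boolP [exists x, (m x != 0%N) && (v x == 0)]).
  by move=> /existsP [x /andP [Hx /eqP Hv]]; rewrite (prod_zero Hx Hv) mulr0.
rewrite negb_exists => /forallP H.
have Hb : inblock j m.
  apply/forallP => x; apply/implyP => Hx; exact: (Hin m Hm x Hx).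
have Hb' : forall x : 'I_(n.+1), m x != 0%N -> (nn i.-1 <= x <= nn i)%N.
  move=> x Hx; apply: (in_block Hi Xv).
  by move: (H x); rewrite Hx /=.
have Hji : j != i by rewrite eq_sym.
have [i' [Hi' Hp Hi'j]] := two_blocks Hj Hi Hji Hb Hb'.
exfalso; apply: (pure_free _ Hm Hp) => t Ht; apply: Hg.
case: Hi'j => E.
  by rewrite -E; exact: (shared Hi' Ht).1.
by rewrite -E; exact: (shared Hi' Ht).2.
Qed.


Variable lt : rel Mon.

Definition Tid i : Poly -> Prop :=
  ideal_mul (@var_ideal k n (nn i.-1) (nn i).-1) (@var_ideal k n (nn i).+1 n).
Definition RHS (J : nat -> Poly -> Prop) :=
  ideal_add (ideal_sum (fun i => gen_ideal (initial_sub lt (J i) (nn i.-1) (nn i))) 1 l.+1)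
            (ideal_sum Tid 1 l).
Definition IN := initial_ideal lt IX.

Lemma RHS_ideal J : is_ideal (RHS J).
Proof.
apply: ideal_add_ideal; apply: ideal_sum_ideal => i _; exact: gen_ideal_ideal.
Qed.

Lemma Tid_ideal i : is_ideal (Tid i).
Proof. exact: gen_ideal_ideal. Qed.

Lemma IN_ideal : is_ideal IN.
Proof. exact: gen_ideal_ideal. Qed.

Lemma ideal_mulr (I : Poly -> Prop) h : is_ideal I -> is_ideal (fun g => I (g * h)).
Proof.
move=> [I0 ID IM]; split; first by rewrite mul0r.
  by move=> a b Ha Hb; rewrite mulrDl; apply: ID.
by move=> c a Ha; rewrite -mulrA; apply: IM.
Qed.

Lemma ideal_mull (I : Poly -> Prop) x : is_ideal I -> is_ideal (fun h => I (x * h)).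
Proof.
move=> [I0 ID IM]; split; first by rewrite mulr0.
  by move=> a b Ha Hb; rewrite mulrDr; apply: ID.
by move=> c a Ha; rewrite mulrCA; apply: IM.
Qed.

Lemma lead_X m : is_lead lt ('X_[m] : Poly) m.
Proof.
split; first by rewrite msuppX mem_seq1.
by move=> m'; rewrite msuppX mem_seq1 => /eqP ->; rewrite eqxx.
Qed.

Lemma X_neq0 m : ('X_[m] : Poly) != 0.
Proof. by rewrite -msupp_eq0 msuppX. Qed.

Lemma XaXb_IN i (a b : 'I_(n.+1)) : (1 <= i < l)%N -> (nn i.-1 <= a < nn i)%N ->
  (nn i < b)%N -> IN ('X_a * 'X_b).
Proof.
move=> Hi Ha Hb; rewrite -mpolyXD; apply: gen_ideal_base.
exists 'X_[mnm1 a + mnm1 b], (mnm1 a + mnm1 b)%MM; split => //.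
- move=> v [j Hj Xv]; rewrite mpolyXD mevalM !mevalXU.
  by case: (pair_vanish Hi Ha Hb Hj Xv) => ->; rewrite ?mul0r ?mulr0.
- exact: X_neq0.
- exact: lead_X.
Qed.

Lemma T_IN i : (1 <= i < l)%N -> forall f, Tid i f -> IN f.
Proof.
move=> Hi; apply: gen_ideal_min; first exact: IN_ideal.
move=> p [g [h [Hg [Hh ->]]]].
have Hnn : (0 < nn i)%N by rewrite -H0; apply: nn_lt; lia.
move: g Hg; apply: gen_ideal_min; first exact: ideal_mulr IN_ideal.
move=> _ [a [Ha ->]].
move: h Hh; apply: gen_ideal_min; first exact: ideal_mull IN_ideal.
move=> _ [b [Hb ->]].
apply: (XaXb_IN Hi); lia.
Qed.

Lemma initsub_IN (J : Poly -> Prop) i : (1 <= i <= l)%N ->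
  (forall f, J f -> in_vars (nn i.-1) (nn i) f -> IX f) ->
  forall f, initial_sub lt J (nn i.-1) (nn i) f -> IN f.
Proof.
move=> Hi HJ; apply: gen_ideal_in_sub; first exact: IN_ideal.
move=> p [f [m [Jf Hf Hf0 Hl' ->]]]; apply: gen_ideal_base.
by exists f, m; split => //; apply: HJ.
Qed.

Lemma RHS_IN J : (forall i, (1 <= i <= l)%N -> forall f, J i f -> in_vars (nn i.-1) (nn i) f -> IX f) ->
  forall f, RHS J f -> IN f.
Proof.
move=> HJ f [g [h [[gf [Hgf ->]] [[hf [Hhf ->]] ->]]]].
case: IN_ideal => I0 ID IM.
apply: (ID).
  rewrite big_seq; apply: big_ind; [exact: I0 | move=> x y Hx Hy; exact: (ID x y Hx Hy) | ].
  move=> i; rewrite mem_index_iota => Hi.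
  move: (Hgf i Hi); apply: gen_ideal_min; first exact: IN_ideal.
  apply: initsub_IN; first lia.
  by apply: HJ; lia.
rewrite big_seq; apply: big_ind; [exact: I0 | move=> x y Hx Hy; exact: (ID x y Hx Hy) | ].
move=> i; rewrite mem_index_iota => Hi.
exact: (T_IN Hi (Hhf i Hi)).
Qed.

Lemma gen_ideal_in_mono P (S S' : Poly -> Prop) : (forall s, S s -> S' s) ->
  forall f, gen_ideal_in P S f -> gen_ideal_in P S' f.
Proof.
move=> H f [r [g [h [Hgh ->]]]]; exists r, g, h; split => //.
by move=> i Hi; case: (Hgh i Hi) => A B; split => //; apply: H.
Qed.

Lemma RHS_mono J J' : (forall i, (1 <= i <= l)%N -> forall f, J i f ->
    in_vars (nn i.-1) (nn i) f -> J' i f) ->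
  forall f, RHS J f -> RHS J' f.
Proof.
move=> HJ f [g [h [[gf [Hgf ->]] [Hh ->]]]].
exists (\sum_(1 <= i < l.+1) gf i), h; split => //.
exists gf; split => // i Hi; move: (Hgf i Hi); apply: gen_ideal_in_mono.
apply: gen_ideal_in_mono => p [f0 [m [Jf Hf Hf0 Hl' ->]]].
exists f0, m; split => //; apply: HJ => //; lia.
Qed.

Lemma lead_in_RHS f m : IX f -> f != 0 -> is_lead lt f m ->
  RHS (fun i => vanishing_ideal (X i)) 'X_[m].
Proof.
move=> Hf Hf0 [Hmf Hlead].
have [Z1 _ _] : is_ideal (ideal_sum (fun i => gen_ideal (initial_sub lt (vanishing_ideal (X i)) (nn i.-1) (nn i))) 1 l.+1).
  by apply: ideal_sum_ideal => i _; apply: gen_ideal_ideal.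
have [Z2 _ _] : is_ideal (ideal_sum Tid 1 l).
  by apply: ideal_sum_ideal => i _; apply: gen_ideal_ideal.
case: (boolP (inT m)) => HT.
  move: HT => /existsP [i /existsP [a /existsP [b /and5P [Hi0 Ha1 Ha2 Hb /andP [Hma Hmb]]]]].
  apply: ideal_addr => //.
  apply: (@ideal_sum_el _ _ _ _ _ i); first by move=> i' _; case: (Tid_ideal i').
    by rewrite Hi0 ltn_ord.
  exists 1%N, (fun _ => 'X_[(m - mnm1 a - mnm1 b)%MM]), (fun _ => 'X_a * 'X_b); split.
    move=> _ _; split => //; exists 'X_a, 'X_b; split; last split => //.
      apply: gen_ideal_base; exists a; split => //; lia.
    apply: gen_ideal_base; exists b; split => //; have := ltn_ord b; lia.
  rewrite big_ord1 -!mpolyXD; congr mpolyX; apply/mnmP => x.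
  rewrite !mnmDE !mnmBE !mnm1E.
  have Hab : a != b by rewrite -(inj_eq val_inj) /=; apply/eqP; lia.
  case: (eqVneq a x) => [Eax|Hax]; case: (eqVneq b x) => [Ebx|Hbx].
  - by move: Hab; rewrite Eax Ebx eqxx.
  - rewrite -Eax /=; lia.
  - rewrite -Ebx /=; lia.
  - rewrite /=; lia.
have [Hj Hbj] := blk_spec HT.
set j := blk m in Hj Hbj.
pose S := fun m' => ~~ inT m' && (blk m' == j).
pose h := filt S f.
have Hmh : m \in msupp h by rewrite /h msupp_filt /S HT eqxx Hmf.
apply: ideal_addl => //.
apply: (@ideal_sum_el _ _ _ _ _ j).
  by move=> i' _; case: (gen_ideal_ideal (initial_sub lt (vanishing_ideal (X i')) (nn i'.-1) (nn i'))).
  lia.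
apply: gen_ideal_base.
exists 1%N, (fun _ => 1), (fun _ => 'X_[m]); split; last by rewrite big_ord1 mul1r.
move=> _ _; split.
  by move=> m'; rewrite msupp1 mem_seq1 => /eqP -> x; rewrite mnm0E eqxx.
exists h, m; split => //.
- move=> v Xv; rewrite filt_eval_eq; first by apply: Hf; exists j.
  move=> m' Hm'; rewrite /S negb_and negbK.
  case: (boolP (inT m')) => HT' /=; first by move=> _; apply: (inT_vanish HT' Hj Xv).
  move=> Hne.
  case: (boolP [exists x, (m' x != 0%N) && (v x == 0)]).
    by move=> /existsP [x /andP [Hx /eqP Hv]]; rewrite (prod_zero Hx Hv).
  rewrite negb_exists => /forallP H.
  have [Hj' Hb'] := blk_spec HT'.
  have Hbj' : forall x : 'I_(n.+1), m' x != 0%N -> (nn j.-1 <= x <= nn j)%N.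
    by move=> x Hx; apply: (in_block Hj Xv); move: (H x); rewrite Hx.
  have [i' [Hi' Hp _]] := two_blocks Hj' Hj Hne Hb' Hbj'.
  by case: (pure_not_IX Hf Hi' Hm' Hp).
- move=> m'; rewrite /h msupp_filt => /andP [/andP [HT' /eqP Hb] _] x Hx.
  have [_ /forallP Hb'] := blk_spec HT'.
  by move: (Hb' x); rewrite Hb Hx.
- by apply/eqP => E; move: Hmh; rewrite E msupp0.
- split => // m'; rewrite /h msupp_filt => /andP [_ Hm'] Hne; exact: Hlead.
Qed.

Lemma IN_RHS : forall f, IN f -> RHS (fun i => vanishing_ideal (X i)) f.
Proof.
apply: gen_ideal_min; first exact: RHS_ideal.
by move=> p [f [m [Hf Hf0 Hl' ->]]]; apply: (lead_in_RHS Hf).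
Qed.

End Main.

Unset Implicit Arguments.

Theorem corollary3p2 (k : closedFieldType) (n l : nat)
  (nn : nat -> nat) (X : nat -> ('I_(n.+1) -> k) -> Prop)
  (lt : rel 'X_{1..n.+1}) :
  [pchar k] =i pred0 ->
  (0 < l)%N ->
  nn 0%N = 0%N -> (forall i, (i < l)%N -> (nn i < nn i.+1)%N) -> nn l = n ->
  (forall i, (1 <= i <= l)%N -> proj_variety (X i)) ->
  (forall i j, (1 <= i <= l)%N -> (1 <= j <= l)%N -> i <> j ->
     ((exists v, X i v /\ X j v) <-> (i = j.+1 \/ j = i.+1))) ->
  (forall i, (1 <= i <= l)%N -> forall v, X i v ->
     forall x : 'I_(n.+1), ((x < nn i.-1)%N \/ (nn i < x)%N) -> v x = 0) ->
  monomial_order lt ->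
  let XX := fun v => exists2 i, (1 <= i <= l)%N & X i v in
  let I_X := vanishing_ideal XX in
  let T := fun i => ideal_mul (@var_ideal k n (nn i.-1) (nn i).-1)
                              (@var_ideal k n (nn i).+1 n) in
  same_ideal (initial_ideal lt I_X)
    (ideal_add
       (ideal_sum (fun i => gen_ideal
                      (initial_sub lt (vanishing_ideal (X i)) (nn i.-1) (nn i))) 1 l.+1)
       (ideal_sum T 1 l))
  /\
  same_ideal (initial_ideal lt I_X)
    (ideal_add
       (ideal_sum (fun i => gen_ideal
                      (initial_sub lt I_X (nn i.-1) (nn i))) 1 l.+1)
       (ideal_sum T 1 l)).
Proof.
move=> _ Hl H0 Hmono Hnl Hvar Hchain Hcont _ XX I_X T.
have Hsub : forall i, (1 <= i <= l)%N -> forall f, vanishing_ideal (X i) f ->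
    in_vars (nn i.-1) (nn i) f -> IX l X f.
  move=> i Hi f Hf Hin; exact: (vanish_block Hl H0 Hmono Hnl Hvar Hchain Hcont Hi Hf Hin).
have A : forall f, IN l X lt f -> RHS l nn lt (fun i => vanishing_ideal (X i)) f.
  by move=> f Hf; apply: (IN_RHS Hl H0 Hmono Hnl Hvar Hchain Hcont).
have B : forall J, (forall i, (1 <= i <= l)%N -> forall f, J i f -> in_vars (nn i.-1) (nn i) f -> IX l X f) ->
    forall f, RHS l nn lt J f -> IN l X lt f.
  by move=> J HJ f Hf; apply: (RHS_IN Hl H0 Hmono Hnl Hcont HJ).
split => f; split.
- exact: A.
- exact: (B _ Hsub).
- move=> Hf; move: (A f Hf); apply: RHS_mono => i Hi g Hg Hin.
  exact: (Hsub i Hi g Hg Hin).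
- by apply: (B (fun _ => I_X)) => i Hi g Hg _.
Qed.
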